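(* For the games $\mathcal G$ and $\mathcal G^{\rm sm}$: (a) a B-QGNE of $\mathcal G$ always exists; (b) a QGNE of $\mathcal G^{\rm sm}$ and a restricted B-QGNE of $\mathcal G$ exist provided $\mathcal P\ne\emptyset$; (c) if $\mathbf x^\star$ is a (restricted) B-QGNE of $\mathcal G$ satisfying constraint (C$_q$) for all $q=1,\dots,Q$, then $\mathbf x^\star$ is a QGNE of $\mathcal G^{\rm sm}$; (d) if $\mathbf x^\star$ is a QGNE of $\mathcal G^{\rm sm}$, then $\mathbf x^\star$ is a restricted B-QGNE of $\mathcal G$.
   Context: Fix integers $Q,J\ge1$, noise power $\sigma^2>0$, budgets $P_q>0$ ($q=1,\dots,Q$) and $P^{J}_j>0$ ($j=1,\dots,J$), and positive channel gains $H^{SD}_{qq},H^{SE}_{qe},H^{JD}_{jq},H^{JE}_{je}$. Variables: $p_q\ge0$ and $p^J_{jq}\ge0$; $\mathbf p^J_q=(p^J_{jq})_{j=1}^J$, $\mathbf x_q=(p_q,\mathbf p^J_q)$, $\mathbf x=(\mathbf x_q)_{q=1}^Q$, $\mathbf p^J_{-q}=(\mathbf p^J_r)_{r\ne q}$. Define $r_{qq}(\mathbf x_q)=\log\big(1+\frac{H^{SD}_{qq}p_q}{\sigma^2+\sum_jH^{JD}_{jq}p^J_{jq}}\big)$, $r_{qe}(\mathbf x_q)=\log\big(1+\frac{H^{SE}_{qe}p_q}{\sigma^2+\sum_jH^{JE}_{je}p^J_{jq}}\big)$, $\tilde r^s_q=r_{qq}-r_{qe}$, $r^s_q=\max(0,\tilde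 r^s_q)$. Constraint (C$_q$): $\sum_{j=1}^J(H^{SD}_{qq}H^{JE}_{je}-H^{SE}_{qe}H^{JD}_{jq})p^J_{jq}+(H^{SD}_{qq}-H^{SE}_{qe})\sigma^2\ge0$. $\mathcal P_q(\mathbf p^J_{-q})=\{\mathbf x_q\ge\mathbf 0: p_q\le P_q,\ \sum_{r=1}^Qp^J_{jr}\le P^J_j\ \forall j\}$ (with $p^J_{jr}$, $r\neq q$, fixed by $\mathbf p^J_{-q}$); $\mathcal P^{\rm sm}_q(\mathbf p^J_{-q})=\{\mathbf x_q\in\mathcal P_q(\mathbf p^J_{-q}):\text{(C}_q\text{) holds}\}$; $\mathcal P=\{\mathbf x\ge\mathbf 0: p_q\le P_q \text{ and (C}_q\text{) for all }q,\ \sum_{r}p^J_{jr}\le P^J_j\ \forall j\}$. Game $\mathcal G$: player $q$ maximizes $r^s_q(\mathbf x_q)$ over $\mathcal P_q(\mathbf p^J_{-q})$; game $\mathcal G^{\rm sm}$: player $q$ maximizes $\tilde r^s_q(\mathbf x_q)$ over $\mathcal P^{\rm sm}_q(\mathbf p^J_{-q})$. Let $r^{s\prime}_q(\mathbf x_q;\mathbf d)$ denote the one-sided directional derivative of $r^s_q$ at $\mathbf x_q$ in direction $\mathbf d$. A B-QGNE of $\mathcal G$ is $\mathbf x^\star$ such that for all $q$: $\mathbf x^\star_q\in\mathcal P_q(\mathbf p^{J\star}_{-q})$ and $r^{s\prime}_q(\mathbf x^\star_q;\mathbf x_q-\mathbf x^\star_q)\le0$ for all $\mathbf x_q\in\mathcal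 P_q(\mathbf p^{J\star}_{-q})$. A restricted B-QGNE of $\mathcal G$ is $\mathbf x^\star$ such that for all $q$: $\mathbf x^\star_q\in\mathcal P_q(\mathbf p^{J\star}_{-q})$ and $r^{s\prime}_q(\mathbf x^\star_q;\mathbf x_q-\mathbf x^\star_q)\le0$ for all $\mathbf x_q\in\mathcal P^{\rm sm}_q(\mathbf p^{J\star}_{-q})$. A QGNE of $\mathcal G^{\rm sm}$ is $\mathbf x^\star$ such that for all $q$: $\mathbf x^\star_q\in\mathcal P^{\rm sm}_q(\mathbf p^{J\star}_{-q})$ and $\nabla\tilde r^s_q(\mathbf x^\star_q)^T(\mathbf x_q-\mathbf x^\star_q)\le0$ for all $\mathbf x_q\in\mathcal P^{\rm sm}_q(\mathbf p^{J\star}_{-q})$. *)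

(* Defs.v *)
From Stdlib Require Import Reals Lra.
Open Scope R_scope.

Fixpoint rsum (n : nat) (f : nat -> R) : R :=
  match n with O => 0 | S k => rsum k f + f k end.

(* System data. Players q = 0..Q-1, jammers j = 0..J-1, single eavesdropper e. *)
Record params := Params {
  NQ : nat; NJ : nat; sig2 : R;
  Pb : nat -> R;
  PJb : nat -> R;
  HSD : nat -> R;
  HSE : nat -> R;
  HJD : nat -> nat -> R;    (* HJD j q = H^JD_jq *)
  HJE : nat -> R
}.

(* A local strategy x_q is a vector v : nat -> R with
   v 0 = p_q and v (S j) = p^J_{jq} (j = 0..J-1).
   A global profile X : nat -> (nat -> R) gives X q = x_q. *)

Definition r_qq (s : params) (q : nat) (v : nat -> R) : R :=
  ln (1 + HSD s q * v 0%nat /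
          (sig2 s + rsum (NJ s) (fun j => HJD s j q * v (S j)))).

Definition r_qe (s : params) (q : nat) (v : nat -> R) : R :=
  ln (1 + HSE s q * v 0%nat /
          (sig2 s + rsum (NJ s) (fun j => HJE s j * v (S j)))).

Definition rt_s (s : params) (q : nat) (v : nat -> R) : R := r_qq s q v - r_qe s q v.
Definition r_s (s : params) (q : nat) (v : nat -> R) : R := Rmax 0 (rt_s s q v).

Definition Cq (s : params) (q : nat) (v : nat -> R) : Prop :=
  rsum (NJ s) (fun j => (HSD s q * HJE s j - HSE s q * HJD s j q) * v (S j))
  + (HSD s q - HSE s q) * sig2 s >= 0.

(* v in P_q(p^J_{-q}), the other players' jamming powers taken from X *)
Definition inPq (s : params) (X : nat -> nat -> R) (q : nat) (v : nat -> R) : Prop :=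
  (forall k, (k <= NJ s)%nat -> 0 <= v k) /\
  v 0%nat <= Pb s q /\
  (forall j, (j < NJ s)%nat ->
     rsum (NQ s) (fun r => if Nat.eq_dec r q then v (S j) else X r (S j)) <= PJb s j).

Definition inPsm (s : params) (X : nat -> nat -> R) (q : nat) (v : nat -> R) : Prop :=
  inPq s X q v /\ Cq s q v.

Definition P_nonempty (s : params) : Prop :=
  exists X : nat -> nat -> R,
    (forall q, (q < NQ s)%nat ->
       (forall k, (k <= NJ s)%nat -> 0 <= X q k) /\ X q 0%nat <= Pb s q /\ Cq s q (X q)) /\
    (forall j, (j < NJ s)%nat -> rsum (NQ s) (fun r => X r (S j)) <= PJb s j).

Definition is_dirderiv (f : (nat -> R) -> R) (v d : nat -> R) (L : R) : Prop :=
  forall eps, 0 < eps -> exists delta, 0 < delta /\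
    forall t, 0 < t < delta ->
      Rabs ((f (fun k => v k + t * d k) - f v) / t - L) < eps.

Definition is_gradient (J : nat) (f : (nat -> R) -> R) (v g : nat -> R) : Prop :=
  forall k, (k <= J)%nat ->
    derivable_pt_lim (fun t => f (fun i => if Nat.eq_dec i k then t else v i)) (v k) (g k).

Definition dotJ (J : nat) (g d : nat -> R) : R := rsum (S J) (fun k => g k * d k).

Definition vsub (w v : nat -> R) : nat -> R := fun k => w k - v k.

Definition BQGNE (s : params) (X : nat -> nat -> R) : Prop :=
  forall q, (q < NQ s)%nat ->
    inPq s X q (X q) /\
    forall v, inPq s X q v ->
      exists L, is_dirderiv (r_s s q) (X q) (vsub v (X q)) L /\ L <= 0.

Definition rBQGNE (s : params) (X : nat -> nat -> R) : Prop :=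
  forall q, (q < NQ s)%nat ->
    inPq s X q (X q) /\
    forall v, inPsm s X q v ->
      exists L, is_dirderiv (r_s s q) (X q) (vsub v (X q)) L /\ L <= 0.

Definition QGNE_sm (s : params) (X : nat -> nat -> R) : Prop :=
  forall q, (q < NQ s)%nat ->
    inPsm s X q (X q) /\
    forall v, inPsm s X q v ->
      exists g, is_gradient (NJ s) (rt_s s q) (X q) g /\
                dotJ (NJ s) g (vsub v (X q)) <= 0.

Definition valid_params (s : params) : Prop :=
  (1 <= NQ s)%nat /\ (1 <= NJ s)%nat /\ 0 < sig2 s /\
  (forall q, (q < NQ s)%nat -> 0 < Pb s q /\ 0 < HSD s q /\ 0 < HSE s q) /\
  (forall j, (j < NJ s)%nat -> 0 < PJb s j /\ 0 < HJE s j) /\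
  (forall j q, (j < NJ s)%nat -> (q < NQ s)%nat -> 0 < HJD s j q).

(* Main.v *)
Require Import Defs.
From Stdlib Require Import Reals Lra Lia FunctionalExtensionality.
Open Scope R_scope.

Lemma div_nonneg (a b : R) : 0 <= a -> 0 < b -> 0 <= a / b.
Proof. intros; unfold Rdiv; apply Rmult_le_pos; [lra| left; apply Rinv_0_lt_compat; lra]. Qed.

Lemma deriv_lnfrac (a b c e s0 : R) :
  0 < c + e * s0 -> 0 <= a + b * s0 ->
  derivable_pt_lim (fun s => Rpower.ln (1 + (a + b * s) / (c + e * s))) s0
    ((b * (c + e * s0) - e * (a + b * s0)) / ((c + e * s0) * ((c + e * s0) + (a + b * s0)))).
Proof.
  intros Hc Ha.
  set (f1 := fun s => 1 + (a + b * s) / (c + e * s)).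
  assert (H1 : derivable_pt_lim f1 s0
     (0 + ((b * 1) * (c + e * s0) - (e * 1) * (a + b * s0)) / (c + e * s0)²)).
  { unfold f1.
    apply (derivable_pt_lim_plus (fct_cte 1)
       (fun s => (a + b * s) / (c + e * s))).
    - apply derivable_pt_lim_const.
    - apply (derivable_pt_lim_div (fun s => a + b * s) (fun s => c + e * s)).
      + replace (b * 1) with (0 + b * 1) by ring.
        apply (derivable_pt_lim_plus (fct_cte a) (mult_real_fct b id)).
        apply derivable_pt_lim_const.
        apply derivable_pt_lim_scal; apply derivable_pt_lim_id.
      + replace (e * 1) with (0 + e * 1) by ring.
        apply (derivable_pt_lim_plus (fct_cte c) (mult_real_fct e id)).
        apply derivable_pt_lim_const.
        apply derivable_pt_lim_scal; apply derivable_pt_lim_id.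
      + lra. }
  assert (Hpos : 0 < f1 s0).
  { unfold f1. assert (0 <= (a + b * s0) / (c + e * s0)).
    { apply div_nonneg; lra. } lra. }
  pose proof (derivable_pt_lim_comp f1 Rpower.ln s0 _ _ H1 (derivable_pt_lim_ln _ Hpos)) as H2.
  unfold comp in H2. unfold f1 in H2 |- *.
  match goal with |- derivable_pt_lim _ _ ?L => replace L with
   (/ (1 + (a + b * s0) / (c + e * s0)) *
       (0 + (b * 1 * (c + e * s0) - e * 1 * (a + b * s0)) / (c + e * s0)²)) end.
  exact H2.
  unfold Rsqr. field. split; lra.
Qed.

Lemma rsum_ext (n : nat) (f g : nat -> R) :
  (forall j, (j < n)%nat -> f j = g j) -> rsum n f = rsum n g.
Proof.
  induction n; intros H; simpl; [reflexivity|].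
  rewrite IHn by (intros; apply H; lia). rewrite H by lia. reflexivity.
Qed.

Lemma rsum_plus (n : nat) (f g : nat -> R) :
  rsum n (fun j => f j + g j) = rsum n f + rsum n g.
Proof. induction n; simpl; [ring|rewrite IHn; ring]. Qed.

Lemma rsum_scal (n : nat) (c : R) (f : nat -> R) :
  rsum n (fun j => c * f j) = c * rsum n f.
Proof. induction n; simpl; [ring|rewrite IHn; ring]. Qed.

Lemma rsum_nonneg (n : nat) (f : nat -> R) :
  (forall j, (j < n)%nat -> 0 <= f j) -> 0 <= rsum n f.
Proof.
  induction n; intros H; simpl; [lra|].
  assert (0 <= rsum n f) by (apply IHn; intros; apply H; lia).
  assert (0 <= f n) by (apply H; lia). lra.
Qed.

Lemma rsum_le_term (n : nat) (f : nat -> R) (k : nat) :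
  (forall j, (j < n)%nat -> 0 <= f j) -> (k < n)%nat -> f k <= rsum n f.
Proof.
  induction n; intros H Hk; [lia|]. simpl.
  destruct (Nat.eq_dec k n) as [->|Hne].
  - assert (0 <= rsum n f) by (apply rsum_nonneg; intros; apply H; lia). lra.
  - assert (f k <= rsum n f) by (apply IHn; [intros; apply H; lia|lia]).
    assert (0 <= f n) by (apply H; lia). lra.
Qed.

Lemma rsum_le (n : nat) (f g : nat -> R) :
  (forall j, (j < n)%nat -> f j <= g j) -> rsum n f <= rsum n g.
Proof.
  induction n; intros H; simpl; [lra|].
  assert (rsum n f <= rsum n g) by (apply IHn; intros; apply H; lia).
  assert (f n <= g n) by (apply H; lia). lra.
Qed.

Lemma rsum_update (n q : nat) (A : R) (B : nat -> R) :
  (q < n)%nat ->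
  rsum n (fun r => if Nat.eq_dec r q then A else B r) = rsum n B - B q + A.
Proof.
  induction n; intros Hq; [lia|]. simpl.
  destruct (Nat.eq_dec n q) as [->|Hne].
  - rewrite (rsum_ext q _ B). ring.
    intros j Hj. destruct (Nat.eq_dec j q); [lia|reflexivity].
  - rewrite IHn by lia. ring.
Qed.

Lemma rsum_shift (n : nat) (f : nat -> R) :
  rsum (S n) f = f 0%nat + rsum n (fun j => f (S j)).
Proof. induction n; simpl in *; [ring|]. rewrite IHn. ring. Qed.

Lemma dotJ_delta (J k : nat) (g : nat -> R) :
  (k <= J)%nat ->
  dotJ J g (fun i => if Nat.eq_dec i k then 1 else 0) = g k.
Proof.
  intros Hk. unfold dotJ.
  rewrite (rsum_ext _ _ (fun i => if Nat.eq_dec i k then g k else 0)).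
  2:{ intros j _. destruct (Nat.eq_dec j k); subst; ring. }
  rewrite (rsum_update (S J) k (g k) (fun _ => 0)) by lia.
  assert (rsum (S J) (fun _ => 0) = 0).
  { clear. induction (S J); simpl; [ring|rewrite IHn; ring]. }
  rewrite H. ring.
Qed.

Definition DD (s : params) (q : nat) (y : nat -> R) : R :=
  sig2 s + rsum (NJ s) (fun j => HJD s j q * y (S j)).
Definition DE (s : params) (q : nat) (y : nat -> R) : R :=
  sig2 s + rsum (NJ s) (fun j => HJE s j * y (S j)).
Definition K1 (s : params) (q : nat) (y : nat -> R) : R :=
  - (HSD s q * y 0%nat) / (DD s q y * (DD s q y + HSD s q * y 0%nat)).
Definition K2 (s : params) (q : nat) (y : nat -> R) : R :=
  (HSE s q * y 0%nat) / (DE s q y * (DE s q y + HSE s q * y 0%nat)).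
Definition grad (s : params) (q : nat) (y : nat -> R) (k : nat) : R :=
  match k with
  | O => HSD s q / (DD s q y + HSD s q * y 0%nat) - HSE s q / (DE s q y + HSE s q * y 0%nat)
  | S j => K1 s q y * HJD s j q + K2 s q y * HJE s j
  end.

Lemma lin_rsum (n : nat) (c x d : nat -> R) (t : R) :
  rsum n (fun j => c j * (x j + t * d j)) =
  rsum n (fun j => c j * x j) + rsum n (fun j => c j * d j) * t.
Proof.
  rewrite (rsum_ext _ _ (fun j => c j * x j + t * (c j * d j))) by (intros; ring).
  rewrite rsum_plus, rsum_scal. ring.
Qed.

Lemma line_rqq (s : params) (q : nat) (x d : nat -> R) (t : R) :
  r_qq s q (fun k => x k + t * d k) =
  Rpower.ln (1 + (HSD s q * x 0%nat + HSD s q * d 0%nat * t) /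
     ((sig2 s + rsum (NJ s) (fun j => HJD s j q * x (S j))) +
      rsum (NJ s) (fun j => HJD s j q * d (S j)) * t)).
Proof.
  unfold r_qq.
  rewrite (lin_rsum (NJ s) (fun j => HJD s j q) (fun j => x (S j)) (fun j => d (S j))).
  f_equal. f_equal. f_equal; ring.
Qed.

Lemma line_rqe (s : params) (q : nat) (x d : nat -> R) (t : R) :
  r_qe s q (fun k => x k + t * d k) =
  Rpower.ln (1 + (HSE s q * x 0%nat + HSE s q * d 0%nat * t) /
     ((sig2 s + rsum (NJ s) (fun j => HJE s j * x (S j))) +
      rsum (NJ s) (fun j => HJE s j * d (S j)) * t)).
Proof.
  unfold r_qe.
  rewrite (lin_rsum (NJ s) (fun j => HJE s j) (fun j => x (S j)) (fun j => d (S j))).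
  f_equal. f_equal. f_equal; ring.
Qed.

Lemma line_deriv (s : params) (q : nat) (x d : nat -> R) (s0 : R) :
  let y := fun k => x k + s0 * d k in
  0 < DD s q y -> 0 < DE s q y -> 0 <= HSD s q * y 0%nat -> 0 <= HSE s q * y 0%nat ->
  derivable_pt_lim (fun t => rt_s s q (fun k => x k + t * d k)) s0
     (dotJ (NJ s) (grad s q y) d).
Proof.
  intros y HC1 HC2 HA1 HA2.
  set (a1 := HSD s q * x 0%nat). set (b1 := HSD s q * d 0%nat).
  set (c1 := sig2 s + rsum (NJ s) (fun j => HJD s j q * x (S j))).
  set (e1 := rsum (NJ s) (fun j => HJD s j q * d (S j))).
  set (a2 := HSE s q * x 0%nat). set (b2 := HSE s q * d 0%nat).
  set (c2 := sig2 s + rsum (NJ s) (fun j => HJE s j * x (S j))).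
  set (e2 := rsum (NJ s) (fun j => HJE s j * d (S j))).
  assert (EC1 : DD s q y = c1 + e1 * s0).
  { unfold DD, y, c1, e1. rewrite (lin_rsum (NJ s) (fun j => HJD s j q) (fun j => x (S j)) (fun j => d (S j))). ring. }
  assert (EC2 : DE s q y = c2 + e2 * s0).
  { unfold DE, y, c2, e2. rewrite (lin_rsum (NJ s) (fun j => HJE s j) (fun j => x (S j)) (fun j => d (S j))). ring. }
  assert (EA1 : HSD s q * y 0%nat = a1 + b1 * s0) by (unfold y, a1, b1; ring).
  assert (EA2 : HSE s q * y 0%nat = a2 + b2 * s0) by (unfold y, a2, b2; ring).
  assert (Ef : (fun t => rt_s s q (fun k => x k + t * d k)) =
     (fun t => Rpower.ln (1 + (a1 + b1 * t) / (c1 + e1 * t)) -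
               Rpower.ln (1 + (a2 + b2 * t) / (c2 + e2 * t)))).
  { apply functional_extensionality; intros t. unfold rt_s.
    rewrite line_rqq, line_rqe. fold a1 b1 c1 e1 a2 b2 c2 e2.
    f_equal; f_equal; f_equal; f_equal; ring. }
  rewrite Ef.
  assert (D1 := deriv_lnfrac a1 b1 c1 e1 s0 ltac:(lra) ltac:(lra)).
  assert (D2 := deriv_lnfrac a2 b2 c2 e2 s0 ltac:(lra) ltac:(lra)).
  pose proof (derivable_pt_lim_minus _ _ _ _ _ D1 D2) as D.
  unfold minus_fct in D.
  match goal with |- derivable_pt_lim _ _ ?L =>
    replace L with ((b1 * (c1 + e1 * s0) - e1 * (a1 + b1 * s0)) / ((c1 + e1 * s0) * (c1 + e1 * s0 + (a1 + b1 * s0))) -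
       (b2 * (c2 + e2 * s0) - e2 * (a2 + b2 * s0)) / ((c2 + e2 * s0) * (c2 + e2 * s0 + (a2 + b2 * s0)))) end.
  { exact D. }
  unfold dotJ. rewrite rsum_shift. simpl grad.
  rewrite (rsum_ext _ _ (fun j => K1 s q y * (HJD s j q * d (S j)) + K2 s q y * (HJE s j * d (S j))))
    by (intros; ring).
  rewrite rsum_plus, !rsum_scal. fold e1 e2.
  unfold K1, K2. rewrite EC1, EC2, EA1, EA2. unfold b1, b2.
  field. unfold b1, b2 in *. repeat split; lra.
Qed.

Definition nonnegJ (J : nat) (y : nat -> R) : Prop := forall k, (k <= J)%nat -> 0 <= y k.

Lemma pos_D (s : params) (q : nat) (y : nat -> R) :
  valid_params s -> (q < NQ s)%nat -> nonnegJ (NJ s) y ->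
  0 < DD s q y /\ 0 < DE s q y /\ 0 <= HSD s q * y 0%nat /\ 0 <= HSE s q * y 0%nat.
Proof.
  intros (HQ & HJ & Hsig & HP & HPJ & HJD') Hq Hy.
  destruct (HP q Hq) as (_ & H1 & H2).
  assert (Hy0 : 0 <= y 0%nat) by (apply Hy; lia).
  repeat split.
  - unfold DD. assert (0 <= rsum (NJ s) (fun j => HJD s j q * y (S j))); [|lra].
    apply rsum_nonneg; intros j Hj. apply Rmult_le_pos.
    + left; apply HJD'; auto. + apply Hy; lia.
  - unfold DE. assert (0 <= rsum (NJ s) (fun j => HJE s j * y (S j))); [|lra].
    apply rsum_nonneg; intros j Hj. apply Rmult_le_pos.
    + left; apply (HPJ j Hj). + apply Hy; lia.
  - apply Rmult_le_pos; lra.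
  - apply Rmult_le_pos; lra.
Qed.

Lemma grad_ok (s : params) (q : nat) (y : nat -> R) :
  valid_params s -> (q < NQ s)%nat -> nonnegJ (NJ s) y ->
  is_gradient (NJ s) (rt_s s q) y (grad s q y).
Proof.
  intros Hs Hq Hy k Hk.
  set (e := fun i : nat => if Nat.eq_dec i k then 1 else 0).
  set (x' := fun i => y i - y k * e i).
  assert (Ef : (fun t => rt_s s q (fun i => if Nat.eq_dec i k then t else y i)) =
               (fun t => rt_s s q (fun i => x' i + t * e i))).
  { apply functional_extensionality; intros t. f_equal.
    apply functional_extensionality; intros i. unfold x', e.
    destruct (Nat.eq_dec i k); subst; ring. }
  assert (Ey : (fun i => x' i + y k * e i) = y).
  { apply functional_extensionality; intros i. unfold x'. ring. }
  pose proof (line_deriv s q x' e (y k)) as HL. cbv zeta in HL. rewrite Ey in HL.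
  destruct (pos_D s q y Hs Hq Hy) as (A & B & C & D).
  specialize (HL A B C D). rewrite Ef.
  unfold e in HL. rewrite dotJ_delta in HL by exact Hk. exact HL.
Qed.

Lemma Rle_ln (a b : R) : 0 < a -> a <= b -> Rpower.ln a <= Rpower.ln b.
Proof.
  intros Ha Hab. destruct (Rle_lt_or_eq_dec _ _ Hab) as [Hl|He].
  - left; apply ln_increasing; lra.
  - subst; lra.
Qed.

Lemma Cq_rt_nonneg (s : params) (q : nat) (y : nat -> R) :
  valid_params s -> (q < NQ s)%nat -> nonnegJ (NJ s) y -> Cq s q y -> 0 <= rt_s s q y.
Proof.
  intros Hs Hq Hy HC.
  destruct (pos_D s q y Hs Hq Hy) as (A & B & C & D).
  assert (E : rsum (NJ s) (fun j => (HSD s q * HJE s j - HSE s q * HJD s j q) * y (S j))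
              + (HSD s q - HSE s q) * sig2 s = HSD s q * DE s q y - HSE s q * DD s q y).
  { unfold DE, DD.
    rewrite (rsum_ext _ _ (fun j => HSD s q * (HJE s j * y (S j)) + (- HSE s q) * (HJD s j q * y (S j))))
      by (intros; ring).
    rewrite rsum_plus, !rsum_scal. ring. }
  unfold Cq in HC. rewrite E in HC.
  assert (Hy0 : 0 <= y 0%nat) by (apply Hy; lia).
  assert (Hineq : HSE s q * y 0%nat / DE s q y <= HSD s q * y 0%nat / DD s q y).
  { unfold Rdiv. apply Rmult_le_reg_r with (DE s q y * DD s q y). nra.
    replace (HSE s q * y 0%nat * / DE s q y * (DE s q y * DD s q y)) with (HSE s q * y 0%nat * DD s q y)
      by (field; lra).
    replace (HSD s q * y 0%nat * / DD s q y * (DE s q y * DD s q y)) with (HSD s q * y 0%nat * DE s q y)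
      by (field; lra).
    nra. }
  unfold rt_s, r_qq, r_qe. fold (DD s q y) (DE s q y).
  assert (0 <= HSE s q * y 0%nat / DE s q y) by (apply div_nonneg; lra).
  assert (Rpower.ln (1 + HSE s q * y 0%nat / DE s q y) <= Rpower.ln (1 + HSD s q * y 0%nat / DD s q y))
    by (apply Rle_ln; lra).
  lra.
Qed.

Lemma cont_from_deriv (h : R -> R) (x l : R) :
  derivable_pt_lim h x l ->
  forall eps, 0 < eps -> exists delta, 0 < delta /\ forall t, Rabs (t - x) < delta -> Rabs (h t - h x) < eps.
Proof.
  intros H eps Heps.
  pose proof (derivable_continuous_pt h x (exist _ l H)) as C.
  unfold continuity_pt, continue_in, limit1_in, limit_in in C.
  destruct (C eps Heps) as (alp & Halp & Hc).
  exists alp; split; [exact Halp|]. intros t Ht.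
  destruct (Req_dec t x) as [->|Hne].
  - rewrite Rminus_diag, Rabs_R0; exact Heps.
  - apply (Hc t). split; [|exact Ht]. unfold D_x, no_cond; split; auto.
Qed.

Lemma Rmax0_lip (a b : R) : Rabs (Rmax 0 a - Rmax 0 b) <= Rabs (a - b).
Proof.
  unfold Rmax; destruct (Rle_dec 0 a); destruct (Rle_dec 0 b);
  unfold Rabs; repeat destruct Rcase_abs; lra.
Qed.

Definition dirlim (Q : R -> R) (L : R) : Prop :=
  forall eps, 0 < eps -> exists delta, 0 < delta /\
    forall t, 0 < t < delta -> Rabs (Q t - L) < eps.

Lemma maxdir (h : R -> R) (l : R) :
  derivable_pt_lim h 0 l ->
  exists L, dirlim (fun t => (Rmax 0 (h t) - Rmax 0 (h 0)) / t) L /\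
    (0 < h 0 -> L = l) /\ (h 0 = 0 -> L = Rmax 0 l).
Proof.
  intros H.
  destruct (Rtotal_order (h 0) 0) as [Hneg|[Hz|Hpos]].
  - exists 0. split; [|split; intros; lra].
    intros eps Heps.
    destruct (cont_from_deriv h 0 l H (- h 0) ltac:(lra)) as (d & Hd & Hc).
    exists d; split; [exact Hd|]. intros t Ht.
    assert (Hht : Rabs (h t - h 0) < - h 0) by (apply Hc; rewrite Rminus_0_r, Rabs_right; lra).
    assert (h t < 0) by (unfold Rabs in Hht; destruct Rcase_abs; lra).
    rewrite !Rmax_left by lra. unfold Rdiv. rewrite Rminus_diag, Rmult_0_l, Rminus_0_r, Rabs_R0. exact Heps.
  - exists (Rmax 0 l). split; [|split; intros; [lra|reflexivity]].
    intros eps Heps. destruct (H eps Heps) as (d & Hd).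
    exists d; split; [apply cond_pos|]. intros t Ht.
    assert (Hq := Hd t ltac:(lra) ltac:(rewrite Rabs_right; lra)).
    rewrite Rplus_0_l, Hz, Rminus_0_r in Hq.
    rewrite Hz, (Rmax_left 0 0) by lra. rewrite Rminus_0_r.
    assert (E : Rmax 0 (h t) / t = Rmax 0 (h t / t)).
    { unfold Rmax. destruct (Rle_dec 0 (h t)); destruct (Rle_dec 0 (h t / t)).
      - reflexivity.
      - exfalso. apply n. apply div_nonneg; lra.
      - exfalso. apply n. assert (E2 : h t = (h t / t) * t) by (field; lra). rewrite E2. nra.
      - unfold Rdiv; ring. }
    rewrite E. eapply Rle_lt_trans; [apply Rmax0_lip|exact Hq].
  - exists l. split; [|split; intros; [reflexivity|lra]].
    intros eps Heps. destruct (H eps Heps) as (d & Hd).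
    destruct (cont_from_deriv h 0 l H (h 0) Hpos) as (d2 & Hd2 & Hc).
    exists (Rmin d d2); split; [apply Rmin_pos; [apply cond_pos|lra]|]. intros t Ht.
    assert (Ht1 : t < d) by (pose proof (Rmin_l d d2); lra).
    assert (Ht2 : t < d2) by (pose proof (Rmin_r d d2); lra).
    assert (Hq := Hd t ltac:(lra) ltac:(rewrite Rabs_right; lra)).
    rewrite Rplus_0_l in Hq.
    assert (Hht : Rabs (h t - h 0) < h 0) by (apply Hc; rewrite Rminus_0_r, Rabs_right; lra).
    assert (0 < h t) by (unfold Rabs in Hht; destruct Rcase_abs; lra).
    rewrite !Rmax_right by lra. exact Hq.
Qed.

Lemma dirlim_le0 (Q : R -> R) (L : R) :
  dirlim Q L -> (forall t, 0 < t < 1 -> Q t <= 0) -> L <= 0.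
Proof.
  intros H HQ. destruct (Rle_or_lt L 0) as [|HL]; [assumption|exfalso].
  destruct (H L HL) as (d & Hd & Hc).
  set (t := Rmin d 1 / 2).
  assert (0 < Rmin d 1) by (apply Rmin_pos; lra).
  assert (Rmin d 1 <= d) by apply Rmin_l. assert (Rmin d 1 <= 1) by apply Rmin_r.
  assert (Hc' := Hc t ltac:(unfold t; lra)). assert (HQ' := HQ t ltac:(unfold t; lra)).
  unfold Rabs in Hc'; destruct Rcase_abs; lra.
Qed.

Lemma dirlim_unique (Q : R -> R) (L1 L2 : R) : dirlim Q L1 -> dirlim Q L2 -> L1 = L2.
Proof.
  intros H1 H2. destruct (Req_dec L1 L2) as [|Hne]; [assumption|exfalso].
  set (eps := Rabs (L1 - L2) / 2).
  assert (Hpos : 0 < eps) by (unfold eps; apply Rdiv_lt_0_compat; [apply Rabs_pos_lt; lra|lra]).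
  destruct (H1 eps Hpos) as (d1 & Hd1 & C1). destruct (H2 eps Hpos) as (d2 & Hd2 & C2).
  set (t := Rmin d1 d2 / 2).
  assert (0 < Rmin d1 d2) by (apply Rmin_pos; lra).
  assert (Rmin d1 d2 <= d1) by apply Rmin_l. assert (Rmin d1 d2 <= d2) by apply Rmin_r.
  assert (A := C1 t ltac:(unfold t; lra)). assert (B := C2 t ltac:(unfold t; lra)).
  assert (Rabs (L1 - L2) <= Rabs (Q t - L1) + Rabs (Q t - L2)).
  { replace (L1 - L2) with (- (Q t - L1) + (Q t - L2)) by ring.
    eapply Rle_trans; [apply Rabs_triang|]. rewrite Rabs_Ropp. lra. }
  unfold eps in *. lra.
Qed.

Lemma deriv_le0 (h : R -> R) (l : R) :
  derivable_pt_lim h 0 l -> (forall t, 0 < t < 1 -> h t <= h 0) -> l <= 0.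
Proof.
  intros H Hm. apply (dirlim_le0 (fun t => (h t - h 0) / t)).
  - intros eps Heps. destruct (H eps Heps) as (d & Hd). exists d; split; [apply cond_pos|].
    intros t Ht. specialize (Hd t ltac:(lra) ltac:(rewrite Rabs_right; lra)).
    rewrite Rplus_0_l in Hd. exact Hd.
  - intros t Ht. specialize (Hm t Ht). unfold Rdiv.
    assert (0 < / t) by (apply Rinv_0_lt_compat; lra). nra.
Qed.


Lemma fun0 (x d : nat -> R) : (fun k => x k + 0 * d k) = x.
Proof. apply functional_extensionality; intros; ring. Qed.

Lemma line_deriv0 (s : params) (q : nat) (x d : nat -> R) :
  valid_params s -> (q < NQ s)%nat -> nonnegJ (NJ s) x ->
  derivable_pt_lim (fun t => rt_s s q (fun k => x k + t * d k)) 0 (dotJ (NJ s) (grad s q x) d).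
Proof.
  intros Hs Hq Hx.
  pose proof (line_deriv s q x d 0) as H. cbv zeta in H. rewrite fun0 in H.
  destruct (pos_D s q x Hs Hq Hx) as (A & B & C & D). exact (H A B C D).
Qed.

Lemma dirderiv_exists (s : params) (q : nat) (x d : nat -> R) :
  valid_params s -> (q < NQ s)%nat -> nonnegJ (NJ s) x ->
  exists L, is_dirderiv (r_s s q) x d L /\
    (0 < rt_s s q x -> L = dotJ (NJ s) (grad s q x) d) /\
    (rt_s s q x = 0 -> L = Rmax 0 (dotJ (NJ s) (grad s q x) d)).
Proof.
  intros Hs Hq Hx.
  pose proof (line_deriv0 s q x d Hs Hq Hx) as H.
  destruct (maxdir _ _ H) as (L & HL & H1 & H2).
  cbv beta in H1, H2. rewrite fun0 in H1, H2.
  exists L. split; [|split; assumption].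
  intros eps Heps. destruct (HL eps Heps) as (dl & Hdl & Hc).
  exists dl; split; [exact Hdl|]. intros t Ht. specialize (Hc t Ht). cbv beta in Hc.
  rewrite fun0 in Hc. exact Hc.
Qed.

Lemma dirderiv_dirlim (s : params) (q : nat) (x d : nat -> R) (L : R) :
  is_dirderiv (r_s s q) x d L ->
  dirlim (fun t => (r_s s q (fun k => x k + t * d k) - r_s s q x) / t) L.
Proof. intros H; exact H. Qed.

Lemma player_c (s : params) (q : nat) (x d : nat -> R) (L : R) :
  valid_params s -> (q < NQ s)%nat -> nonnegJ (NJ s) x -> Cq s q x ->
  is_dirderiv (r_s s q) x d L -> L <= 0 -> dotJ (NJ s) (grad s q x) d <= 0.
Proof.
  intros Hs Hq Hx HC HD HL.
  destruct (dirderiv_exists s q x d Hs Hq Hx) as (L' & HD' & H1 & H2).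
  assert (L = L') by (apply (dirlim_unique _ _ _ (dirderiv_dirlim _ _ _ _ _ HD) (dirderiv_dirlim _ _ _ _ _ HD'))).
  subst L'.
  pose proof (Cq_rt_nonneg s q x Hs Hq Hx HC) as Hr.
  destruct (Rle_lt_or_eq_dec _ _ Hr) as [Hp|He].
  - rewrite (H1 Hp) in HL. exact HL.
  - rewrite (H2 (eq_sym He)) in HL. pose proof (Rmax_r 0 (dotJ (NJ s) (grad s q x) d)). lra.
Qed.

Lemma player_d (s : params) (q : nat) (x d : nat -> R) :
  valid_params s -> (q < NQ s)%nat -> nonnegJ (NJ s) x -> Cq s q x ->
  dotJ (NJ s) (grad s q x) d <= 0 ->
  exists L, is_dirderiv (r_s s q) x d L /\ L <= 0.
Proof.
  intros Hs Hq Hx HC Hg.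
  destruct (dirderiv_exists s q x d Hs Hq Hx) as (L & HD & H1 & H2).
  exists L; split; [exact HD|].
  pose proof (Cq_rt_nonneg s q x Hs Hq Hx HC) as Hr.
  destruct (Rle_lt_or_eq_dec _ _ Hr) as [Hp|He].
  - rewrite (H1 Hp). exact Hg.
  - rewrite (H2 (eq_sym He)). rewrite Rmax_left by lra. lra.
Qed.

Lemma player_a (s : params) (q : nat) (x d : nat -> R) :
  valid_params s -> (q < NQ s)%nat -> nonnegJ (NJ s) x ->
  (forall t, 0 < t < 1 -> r_s s q (fun k => x k + t * d k) <= r_s s q x) ->
  exists L, is_dirderiv (r_s s q) x d L /\ L <= 0.
Proof.
  intros Hs Hq Hx Hm.
  destruct (dirderiv_exists s q x d Hs Hq Hx) as (L & HD & _ & _).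
  exists L; split; [exact HD|].
  apply (dirlim_le0 _ _ (dirderiv_dirlim _ _ _ _ _ HD)).
  intros t Ht. specialize (Hm t Ht). unfold Rdiv.
  assert (0 < / t) by (apply Rinv_0_lt_compat; lra). nra.
Qed.

Lemma player_b (s : params) (q : nat) (x d : nat -> R) :
  valid_params s -> (q < NQ s)%nat -> nonnegJ (NJ s) x ->
  (forall t, 0 < t < 1 -> rt_s s q (fun k => x k + t * d k) <= rt_s s q x) ->
  dotJ (NJ s) (grad s q x) d <= 0.
Proof.
  intros Hs Hq Hx Hm.
  apply (deriv_le0 _ _ (line_deriv0 s q x d Hs Hq Hx)).
  intros t Ht. rewrite fun0. apply Hm; exact Ht.
Qed.

Definition CqE (s : params) (q : nat) (v : nat -> R) : R :=
  rsum (NJ s) (fun j => (HSD s q * HJE s j - HSE s q * HJD s j q) * v (S j))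
  + (HSD s q - HSE s q) * sig2 s.

Definition feasible (s : params) (Ce : nat -> (nat -> R) -> R) (X : nat -> nat -> R) : Prop :=
  (forall q, (q < NQ s)%nat -> nonnegJ (NJ s) (X q) /\ X q 0%nat <= Pb s q /\ Ce q (X q) >= 0) /\
  (forall j, (j < NJ s)%nat -> rsum (NQ s) (fun r => X r (S j)) <= PJb s j).

Definition Phi (s : params) (g : nat -> (nat -> R) -> R) (X : nat -> nat -> R) : R :=
  rsum (NQ s) (fun r => g r (X r)).

Lemma best_response (s : params) (Ce g : nat -> (nat -> R) -> R) (X : nat -> nat -> R) :
  feasible s Ce X -> (forall Y, feasible s Ce Y -> Phi s g Y <= Phi s g X) ->
  forall q, (q < NQ s)%nat -> forall v, inPq s X q v -> Ce q v >= 0 -> g q v <= g q (X q).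
Proof.
  intros [HF1 HF2] Hmax q Hq v [Hv1 [Hv2 Hv3]] Hce.
  set (Y := fun r => if Nat.eq_dec r q then v else X r).
  assert (HY : feasible s Ce Y).
  { split.
    - intros r Hr. unfold Y. destruct (Nat.eq_dec r q) as [->|]; [|apply HF1; exact Hr].
      split; [exact Hv1|split; assumption].
    - intros j Hj. rewrite (rsum_ext _ _ (fun r => if Nat.eq_dec r q then v (S j) else X r (S j))).
      + apply Hv3; exact Hj.
      + intros r _. unfold Y. destruct (Nat.eq_dec r q); reflexivity. }
  specialize (Hmax Y HY). unfold Phi in Hmax.
  rewrite (rsum_ext _ _ (fun r => if Nat.eq_dec r q then g q v else g r (X r))) in Hmax.
  - rewrite rsum_update in Hmax by exact Hq. lra.
  - intros r _. unfold Y. destruct (Nat.eq_dec r q) as [->|]; reflexivity.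
Qed.

Lemma feas_inPq (s : params) (Ce : nat -> (nat -> R) -> R) (X : nat -> nat -> R) (q : nat) :
  feasible s Ce X -> (q < NQ s)%nat -> inPq s X q (X q).
Proof.
  intros [HF1 HF2] Hq. destruct (HF1 q Hq) as (A & B & _).
  split; [exact A|split; [exact B|]].
  intros j Hj. rewrite (rsum_ext _ _ (fun r => X r (S j))); [apply HF2; exact Hj|].
  intros r _. destruct (Nat.eq_dec r q) as [->|]; reflexivity.
Qed.

Lemma inPq_convex (s : params) (X : nat -> nat -> R) (q : nat) (x v : nat -> R) (t : R) :
  inPq s X q x -> inPq s X q v -> 0 <= t <= 1 ->
  inPq s X q (fun k => x k + t * vsub v x k).
Proof.
  intros [Hx1 [Hx2 Hx3]] [Hv1 [Hv2 Hv3]] Ht. unfold vsub.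
  split; [|split].
  - intros k Hk. specialize (Hx1 k Hk). specialize (Hv1 k Hk). nra.
  - nra.
  - intros j Hj. specialize (Hx3 j Hj). specialize (Hv3 j Hj).
    rewrite (rsum_ext _ _ (fun r => (1 - t) * (if Nat.eq_dec r q then x (S j) else X r (S j))
                                  + t * (if Nat.eq_dec r q then v (S j) else X r (S j)))).
    + rewrite rsum_plus, !rsum_scal. nra.
    + intros r _. destruct (Nat.eq_dec r q); ring.
Qed.

Lemma CqE_convex (s : params) (q : nat) (x v : nat -> R) (t : R) :
  CqE s q x >= 0 -> CqE s q v >= 0 -> 0 <= t <= 1 ->
  CqE s q (fun k => x k + t * vsub v x k) >= 0.
Proof.
  intros Hx Hv Ht.
  assert (E : CqE s q (fun k => x k + t * vsub v x k) = (1 - t) * CqE s q x + t * CqE s q v).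
  { unfold CqE, vsub.
    rewrite (rsum_ext _ _ (fun j => (1 - t) * ((HSD s q * HJE s j - HSE s q * HJD s j q) * x (S j))
               + t * ((HSD s q * HJE s j - HSE s q * HJD s j q) * v (S j)))) by (intros; ring).
    rewrite rsum_plus, !rsum_scal. ring. }
  rewrite E. nra.
Qed.

Lemma part_a_from_max (s : params) (X : nat -> nat -> R) :
  valid_params s -> feasible s (fun _ _ => 1) X ->
  (forall Y, feasible s (fun _ _ => 1) Y -> Phi s (r_s s) Y <= Phi s (r_s s) X) ->
  BQGNE s X.
Proof.
  intros Hs HF Hmax q Hq. pose proof (feas_inPq s _ X q HF Hq) as HX.
  split; [exact HX|]. intros v Hv.
  apply player_a; [exact Hs|exact Hq|apply (proj1 HF q Hq)|].
  intros t Ht.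
  apply (best_response s (fun _ _ => 1) (r_s s) X HF Hmax q Hq).
  - apply inPq_convex; [exact HX|exact Hv|lra].
  - lra.
Qed.

Lemma part_b_from_max (s : params) (X : nat -> nat -> R) :
  valid_params s -> feasible s (CqE s) X ->
  (forall Y, feasible s (CqE s) Y -> Phi s (rt_s s) Y <= Phi s (rt_s s) X) ->
  QGNE_sm s X.
Proof.
  intros Hs HF Hmax q Hq. pose proof (feas_inPq s _ X q HF Hq) as HX.
  destruct (proj1 HF q Hq) as (Hn & _ & HC).
  split; [split; [exact HX|exact HC]|]. intros v [Hv HCv].
  exists (grad s q (X q)). split; [apply grad_ok; assumption|].
  apply player_b; [exact Hs|exact Hq|exact Hn|].
  intros t Ht.
  apply (best_response s (CqE s) (rt_s s) X HF Hmax q Hq).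
  - apply inPq_convex; [exact HX|exact Hv|lra].
  - apply CqE_convex; [exact HC|exact HCv|lra].
Qed.

Lemma part_c (s : params) (X : nat -> nat -> R) :
  valid_params s -> (BQGNE s X \/ rBQGNE s X) ->
  (forall q, (q < NQ s)%nat -> Cq s q (X q)) -> QGNE_sm s X.
Proof.
  intros Hs HB HC q Hq.
  assert (H : inPq s X q (X q) /\ forall v, inPsm s X q v ->
      exists L, is_dirderiv (r_s s q) (X q) (vsub v (X q)) L /\ L <= 0).
  { destruct HB as [HB|HB]; destruct (HB q Hq) as [H1 H2]; split; auto.
    intros v [Hv _]; apply H2; exact Hv. }
  destruct H as [H1 H2].
  split; [split; [exact H1|apply HC; exact Hq]|].
  intros v Hv. exists (grad s q (X q)).
  split; [apply grad_ok; [exact Hs|exact Hq|exact (proj1 H1)]|].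
  destruct (H2 v Hv) as (L & HD & HL).
  apply (player_c s q (X q) _ L Hs Hq (proj1 H1) (HC q Hq) HD HL).
Qed.

Lemma grad_unique (s : params) (q : nat) (y g : nat -> R) :
  valid_params s -> (q < NQ s)%nat -> nonnegJ (NJ s) y ->
  is_gradient (NJ s) (rt_s s q) y g -> forall k, (k <= NJ s)%nat -> g k = grad s q y k.
Proof.
  intros Hs Hq Hy Hg k Hk.
  apply (uniqueness_limite _ _ _ _ (Hg k Hk) (grad_ok s q y Hs Hq Hy k Hk)).
Qed.

Lemma part_d (s : params) (X : nat -> nat -> R) :
  valid_params s -> QGNE_sm s X -> rBQGNE s X.
Proof.
  intros Hs HQ q Hq. destruct (HQ q Hq) as [[H1 HC] H2].
  split; [exact H1|]. intros v Hv.
  destruct (H2 v Hv) as (g & Hg & Hdot).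
  apply (player_d s q (X q) _ Hs Hq (proj1 H1) HC).
  unfold dotJ in *. rewrite (rsum_ext _ _ (fun k => g k * vsub v (X q) k)); [exact Hdot|].
  intros k Hk. rewrite (grad_unique s q (X q) g Hs Hq (proj1 H1) Hg k ltac:(lia)). reflexivity.
Qed.

Definition agree (s : params) (X Y : nat -> nat -> R) : Prop :=
  forall r k, (r < NQ s)%nat -> (k <= NJ s)%nat -> X r k = Y r k.

Definition extJ (s : params) (g : nat -> (nat -> R) -> R) : Prop :=
  forall q v w, (forall k, (k <= NJ s)%nat -> v k = w k) -> g q v = g q w.

Lemma Phi_agree (s : params) (g : nat -> (nat -> R) -> R) (X Y : nat -> nat -> R) :
  extJ s g -> agree s X Y -> Phi s g X = Phi s g Y.
Proof.
  intros Hg HA. unfold Phi. apply rsum_ext. intros r Hr. apply Hg. intros k Hk. apply HA; assumption.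
Qed.

Lemma feasible_agree (s : params) (Ce : nat -> (nat -> R) -> R) (X Y : nat -> nat -> R) :
  extJ s Ce -> agree s X Y -> feasible s Ce X -> feasible s Ce Y.
Proof.
  intros Hg HA [F1 F2]. split.
  - intros q Hq. destruct (F1 q Hq) as (A & B & C).
    split; [|split].
    + intros k Hk. rewrite <- (HA q k Hq Hk). apply A; exact Hk.
    + rewrite <- (HA q 0%nat Hq ltac:(lia)). exact B.
    + rewrite <- (Hg q (X q) (Y q)); [exact C|]. intros k Hk. apply HA; assumption.
  - intros j Hj. rewrite <- (rsum_ext _ (fun r => X r (S j))); [apply F2; exact Hj|].
    intros r Hr. apply HA; [exact Hr|lia].
Qed.

Fixpoint hmax (n : nat) (F : nat -> R) : R :=
  match n with O => 0 | S n => Rmax (hmax n F) (F n) end.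

Lemma hmax_le0 (n : nat) (F : nat -> R) : hmax n F <= 0 <-> (forall j, (j < n)%nat -> F j <= 0).
Proof.
  induction n; simpl; split.
  - intros; lia.
  - intros; lra.
  - intros H j Hj. destruct (Nat.eq_dec j n) as [->|].
    + eapply Rle_trans; [apply Rmax_r|exact H].
    + apply IHn; [eapply Rle_trans; [apply Rmax_l|exact H]|lia].
  - intros H. apply Rmax_lub; [apply IHn; intros; apply H; lia|apply H; lia].
Qed.

Definition HX (s : params) (Ce : nat -> (nat -> R) -> R) (X : nat -> nat -> R) : R :=
  Rmax (hmax (NQ s) (fun q => Rmax (X q 0%nat - Pb s q) (- Ce q (X q))))
       (hmax (NJ s) (fun j => rsum (NQ s) (fun r => X r (S j)) - PJb s j)).

Lemma HX_feasible (s : params) (Ce : nat -> (nat -> R) -> R) (X : nat -> nat -> R) :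
  (forall q, (q < NQ s)%nat -> nonnegJ (NJ s) (X q)) -> HX s Ce X <= 0 -> feasible s Ce X.
Proof.
  intros Hn H. unfold HX in H.
  assert (H1 : hmax (NQ s) (fun q => Rmax (X q 0%nat - Pb s q) (- Ce q (X q))) <= 0)
    by (eapply Rle_trans; [apply Rmax_l|exact H]).
  assert (H2 : hmax (NJ s) (fun j => rsum (NQ s) (fun r => X r (S j)) - PJb s j) <= 0)
    by (eapply Rle_trans; [apply Rmax_r|exact H]).
  rewrite hmax_le0 in H1, H2. split.
  - intros q Hq. specialize (H1 q Hq). cbv beta in H1.
    pose proof (Rmax_l (X q 0%nat - Pb s q) (- Ce q (X q))).
    pose proof (Rmax_r (X q 0%nat - Pb s q) (- Ce q (X q))).
    split; [apply Hn; exact Hq|split; lra].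
  - intros j Hj. specialize (H2 j Hj). cbv beta in H2. lra.
Qed.

Lemma feasible_HX (s : params) (Ce : nat -> (nat -> R) -> R) (X : nat -> nat -> R) :
  feasible s Ce X -> HX s Ce X <= 0.
Proof.
  intros [F1 F2]. unfold HX. apply Rmax_lub; apply hmax_le0.
  - intros q Hq. destruct (F1 q Hq) as (_ & B & C). apply Rmax_lub; lra.
  - intros j Hj. specialize (F2 j Hj). lra.
Qed.

Definition Mbound (s : params) : R := rsum (NQ s) (Pb s) + rsum (NJ s) (PJb s).

Lemma feasible_bounded (s : params) (Ce : nat -> (nat -> R) -> R) (X : nat -> nat -> R) :
  valid_params s -> feasible s Ce X ->
  forall q k, (q < NQ s)%nat -> (k <= NJ s)%nat -> 0 <= X q k <= Mbound s.
Proof.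
  intros (HQ & HJ & Hsig & HP & HPJ & HJD') [F1 F2] q k Hq Hk.
  assert (S1 : 0 <= rsum (NQ s) (Pb s)) by (apply rsum_nonneg; intros j Hj; left; apply (HP j Hj)).
  assert (S2 : 0 <= rsum (NJ s) (PJb s)) by (apply rsum_nonneg; intros j Hj; left; apply (HPJ j Hj)).
  destruct (F1 q Hq) as (A & B & _). split; [apply A; exact Hk|]. unfold Mbound.
  destruct k as [|j].
  - assert (Pb s q <= rsum (NQ s) (Pb s))
      by (apply rsum_le_term; [intros; left; apply (HP j H)|exact Hq]). lra.
  - assert (X q (S j) <= rsum (NQ s) (fun r => X r (S j))).
    { apply (rsum_le_term (NQ s) (fun r => X r (S j))); [|exact Hq].
      intros r Hr. apply (proj1 (F1 r Hr)); lia. }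
    assert (PJb s j <= rsum (NJ s) (PJb s))
      by (apply rsum_le_term; [intros; left; apply (HPJ j0 H0)|lia]).
    pose proof (F2 j ltac:(lia)). lra.
Qed.

Lemma Rmax0_nonneg (a : R) : 0 <= Rmax 0 a.
Proof. apply Rmax_l. Qed.

Lemma rt_ext (s : params) : extJ s (rt_s s).
Proof.
  intros q v w H. unfold rt_s, r_qq, r_qe. rewrite (H 0%nat ltac:(lia)).
  rewrite (rsum_ext _ (fun j => HJD s j q * v (S j)) (fun j => HJD s j q * w (S j))).
  rewrite (rsum_ext _ (fun j => HJE s j * v (S j)) (fun j => HJE s j * w (S j))). reflexivity.
  all: intros j Hj; rewrite (H (S j) ltac:(lia)); reflexivity.
Qed.

Lemma rs_ext (s : params) : extJ s (r_s s).
Proof. intros q v w H. unfold r_s. rewrite (rt_ext s q v w H). reflexivity. Qed.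

Lemma CqE_ext (s : params) : extJ s (CqE s).
Proof.
  intros q v w H. unfold CqE.
  rewrite (rsum_ext _ _ (fun j => (HSD s q * HJE s j - HSE s q * HJD s j q) * w (S j))). reflexivity.
  intros j Hj; rewrite (H (S j) ltac:(lia)); reflexivity.
Qed.

Lemma one_ext (s : params) : extJ s (fun _ _ => 1).
Proof. intros q v w _; reflexivity. Qed.

Lemma feasible_zero (s : params) : valid_params s -> feasible s (fun _ _ => 1) (fun _ _ => 0).
Proof.
  intros (HQ & HJ & Hsig & HP & HPJ & HJD'). split.
  - intros q Hq. split; [intros k _; lra|]. split; [left; apply (HP q Hq)|lra].
  - intros j Hj. assert (rsum (NQ s) (fun _ => 0) = 0).
    { clear. induction (NQ s); simpl; [ring|rewrite IHn; ring]. }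
    rewrite H. left; apply (HPJ j Hj).
Qed.

Lemma feasible_Pne (s : params) : P_nonempty s -> exists X, feasible s (CqE s) X.
Proof.
  intros (X & H1 & H2). exists X. split; [|exact H2].
  intros q Hq. destruct (H1 q Hq) as (A & B & C). split; [exact A|split; [exact B|exact C]].
Qed.

From mathcomp Require Import all_boot all_order all_algebra.
From mathcomp Require Import all_classical all_reals all_analysis.
From mathcomp Require Import Rstruct Rstruct_topology.
Import Order.TTheory GRing.Theory Num.Theory.

Section MC.
Local Open Scope classical_set_scope.
Local Open Scope ring_scope.

Lemma evt_box (n : nat) (M : R) (f H : 'rV[R]_n -> R) :
  continuous f -> continuous H ->
  (exists v0 : 'rV[R]_n, (forall i, Rle 0 (v0 ord0 i) /\ Rle (v0 ord0 i) M) /\ Rle (H v0) 0) ->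
  exists c : 'rV[R]_n, ((forall i, Rle 0 (c ord0 i) /\ Rle (c ord0 i) M) /\ Rle (H c) 0) /\
    (forall t : 'rV[R]_n, (forall i, Rle 0 (t ord0 i) /\ Rle (t ord0 i) M) -> Rle (H t) 0 ->
        Rle (f t) (f c)).
Proof.
move=> cf cH [v0 [bv0 Hv0]].
pose B := [set v : 'rV[R]_n | forall i, `[0, M]%classic (v ord0 i)].
pose C := H @^-1` [set x : R | x <= 0].
have cB : compact B.
  by apply: (@rV_compact _ _ (fun=> `[0, M]%classic)) => i; exact: segment_compact.
have clC : closed C.
  by apply: preimage_closed; [move=> x _; exact: cH | exact: closed_le].
have cA : compact (B `&` C) by exact: compact_closedI.
have A0 : (B `&` C) !=set0.
  exists v0; split.
    move=> i /=; rewrite in_itv /=; have [h1 h2] := bv0 i.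
    by apply/andP; split; apply/RleP.
  by rewrite /C /=; apply/RleP.
have [c cA' cmax] := EVT_max_rV A0 cA (@continuous_subspaceT _ _ (B `&` C) f cf).
move: cA'; rewrite in_setE => -[cB' cC'].
exists c; split.
  split.
    move=> i; have := cB' i; rewrite /= in_itv /= => /andP[h1 h2].
    by split; apply/RleP.
  by apply/RleP; exact: cC'.
move=> t bt Ht; apply/RleP; apply: cmax; rewrite in_setE; split.
  move=> i /=; rewrite in_itv /=; have [h1 h2] := bt i.
  by apply/andP; split; apply/RleP.
by rewrite /C /=; apply/RleP.
Qed.


Lemma c_cst (T : topologicalType) (a : R) : continuous (fun _ : T => a).
Proof. exact: cst_continuous. Qed.

Lemma c_plus (T : topologicalType) (f g : T -> R) :
  continuous f -> continuous g -> continuous (fun v => Rplus (f v) (g v)).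
Proof. by move=> cf cg x; exact: (@continuousD R R^o T f g x (cf x) (cg x)). Qed.

Lemma c_minus (T : topologicalType) (f g : T -> R) :
  continuous f -> continuous g -> continuous (fun v => Rminus (f v) (g v)).
Proof. by move=> cf cg x; exact: (@continuousB R R^o T f g x (cf x) (cg x)). Qed.

Lemma c_opp (T : topologicalType) (f : T -> R) :
  continuous f -> continuous (fun v => Ropp (f v)).
Proof. by move=> cf x; exact: (@continuousN R R^o T f x (cf x)). Qed.

Lemma c_mult (T : topologicalType) (f g : T -> R) :
  continuous f -> continuous g -> continuous (fun v => Rmult (f v) (g v)).
Proof. by move=> cf cg x; exact: (@continuousM R T f g x (cf x) (cg x)). Qed.

Lemma c_inv (T : topologicalType) (f : T -> R) :
  (forall v, f v <> 0%coqR) -> continuous f -> continuous (fun v => Rinv (f v)).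
Proof. move=> nz cf x; apply: (@continuousV R T f x); last exact: cf.
by apply/eqP; exact: nz. Qed.

Lemma c_div (T : topologicalType) (f g : T -> R) :
  (forall v, g v <> 0%coqR) -> continuous f -> continuous g -> continuous (fun v => Rdiv (f v) (g v)).
Proof. by move=> nz cf cg; apply: c_mult => //; apply: c_inv. Qed.

Lemma c_ln (T : topologicalType) (f : T -> R) :
  (forall v, Rlt 0%coqR (f v)) -> continuous f -> continuous (fun v => Rpower.ln (f v)).
Proof.
move=> pos cf x.
have -> : (fun v => Rpower.ln (f v)) = ((@exp.ln R) \o f).
  by apply: funext => v /=; rewrite RlnE.
apply: continuous_comp; first exact: cf.
by apply: continuous_ln; apply/RltP.
Qed.

Lemma c_max (T : topologicalType) (f g : T -> R) :
  continuous f -> continuous g -> continuous (fun v => Rmax (f v) (g v)).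
Proof.
move=> cf cg x.
have -> : (fun v => Rmax (f v) (g v)) = (f \max g).
  by apply: funext => v /=; rewrite RmaxE.
exact: (@continuous_max R T f g x (cf x) (cg x)).
Qed.

Lemma c_rsum (T : topologicalType) (n : nat) (F : nat -> T -> R) :
  (forall j, Peano.lt j n -> continuous (F j)) -> continuous (fun v => rsum n (fun j => F j v)).
Proof.
elim: n => [|n IH] H /=; first exact: c_cst.
apply: c_plus; first by apply: IH => j Hj; apply: H; lia.
by apply: H; lia.
Qed.

Lemma c_hmax (T : topologicalType) (n : nat) (F : nat -> T -> R) :
  (forall j, Peano.lt j n -> continuous (F j)) -> continuous (fun v => hmax n (fun j => F j v)).
Proof.
elim: n => [|n IH] H /=; first exact: c_cst.
apply: c_max; first by apply: IH => j Hj; apply: H; lia.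
by apply: H; lia.
Qed.


Definition mm (s : params) : nat := (NJ s).+1.
Definition nn (s : params) : nat := (NQ s * mm s)%N.
Definition getv (s : params) (v : 'rV[R]_(nn s)) (i : nat) : R :=
  if (insub i : option 'I_(nn s)) is Some j then v ord0 j else 0%R.
Definition toX (s : params) (v : 'rV[R]_(nn s)) : nat -> nat -> R :=
  fun q k => Rmax 0%R (getv s v (q * mm s + k)%N).
Definition toV (s : params) (Y : nat -> nat -> R) : 'rV[R]_(nn s) :=
  \row_(i < nn s) Y (i %/ mm s)%N (i %% mm s)%N.

Lemma c_getv (s : params) (i : nat) : continuous (fun v : 'rV[R]_(nn s) => getv s v i).
Proof.
rewrite /getv; case: (insub i) => [j|]; last exact: c_cst.
exact: (@coord_continuous R 1 (nn s) ord0 j).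
Qed.

Lemma c_toX (s : params) (q k : nat) : continuous (fun v : 'rV[R]_(nn s) => toX s v q k).
Proof. by apply: c_max; [exact: c_cst | exact: c_getv]. Qed.

Lemma toX_nonneg (s : params) (v : 'rV[R]_(nn s)) q : nonnegJ (NJ s) (toX s v q).
Proof. by move=> k _; exact: Rmax0_nonneg. Qed.

Lemma getv_toV (s : params) (Y : nat -> nat -> R) (q k : nat) :
  Peano.lt q (NQ s) -> Peano.le k (NJ s) -> getv s (toV s Y) (q * mm s + k)%N = Y q k.
Proof.
move=> /ssrnat.ltP Hq /ssrnat.leP Hk.
have Hk' : (k < mm s)%N by rewrite /mm ltnS.
have Hb : (q * mm s + k < nn s)%N.
  rewrite /nn; apply: (@leq_trans (q * mm s + mm s)%N); first by rewrite ltn_add2l.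
  by rewrite -mulSnr leq_mul2r Hq orbT.
rewrite /getv insubT /= mxE.
by rewrite divnMDl // divn_small // addn0 modnMDl modn_small.
Qed.

Lemma toX_toV (s : params) (Y : nat -> nat -> R) (q k : nat) :
  Peano.lt q (NQ s) -> Peano.le k (NJ s) -> Rle 0 (Y q k) -> toX s (toV s Y) q k = Y q k.
Proof. by move=> Hq Hk H0; rewrite /toX getv_toV //; apply: Rmax_right. Qed.

Lemma toV_coord (s : params) (Y : nat -> nat -> R) (i : 'I_(nn s)) :
  exists q k, Peano.lt q (NQ s) /\ Peano.le k (NJ s) /\ toV s Y ord0 i = Y q k.
Proof.
exists (i %/ mm s)%N, (i %% mm s)%N; split; last split.
- apply/ssrnat.ltP; rewrite ltn_divLR; first exact: (ltn_ord i).
  by rewrite /mm.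
- apply/ssrnat.leP; rewrite -ltnS; exact: ltn_pmod.
- by rewrite mxE.
Qed.


Lemma agree_toXV (s : params) (Ce : nat -> (nat -> R) -> R) (Y : nat -> nat -> R) :
  feasible s Ce Y -> agree s (toX s (toV s Y)) Y.
Proof.
move=> [F1 _] r k Hr Hk; apply: toX_toV => //.
by have [A _] := F1 r Hr; apply: A.
Qed.

Lemma agree_sym (s : params) (X Y : nat -> nat -> R) : agree s X Y -> agree s Y X.
Proof. by move=> H r k Hr Hk; rewrite H. Qed.

Lemma exists_max (s : params) (Hs : valid_params s) (g Ce : nat -> (nat -> R) -> R) :
  extJ s g -> extJ s Ce ->
  (forall q, Peano.lt q (NQ s) -> continuous (fun v : 'rV[R]_(nn s) => g q (toX s v q))) ->
  (forall q, Peano.lt q (NQ s) -> continuous (fun v : 'rV[R]_(nn s) => Ce q (toX s v q))) ->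
  (exists X0, feasible s Ce X0) ->
  exists X, feasible s Ce X /\ forall Y, feasible s Ce Y -> Rle (Phi s g Y) (Phi s g X).
Proof.
move=> eg eC cg cC [X0 F0].
pose f := fun v : 'rV[R]_(nn s) => Phi s g (toX s v).
pose H := fun v : 'rV[R]_(nn s) => HX s Ce (toX s v).
have cf : continuous f by rewrite /f /Phi; apply: c_rsum => q Hq; exact: cg.
have cH : continuous H.
  rewrite /H /HX; apply: c_max; apply: c_hmax => q Hq.
    apply: c_max; first by apply: c_minus; [exact: c_toX | exact: c_cst].
    by apply: c_opp; exact: cC.
  by apply: c_minus; [apply: c_rsum => r Hr; exact: c_toX | exact: c_cst].
have box : forall Y, feasible s Ce Y ->
    forall i, Rle 0 (toV s Y ord0 i) /\ Rle (toV s Y ord0 i) (Mbound s).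
  move=> Y FY i; have [q [k [Hq [Hk ->]]]] := toV_coord s Y i.
  exact: (feasible_bounded s Ce Y Hs FY q k Hq Hk).
have HV : forall Y, feasible s Ce Y -> Rle (H (toV s Y)) 0.
  move=> Y FY; rewrite /H; apply: feasible_HX.
  apply: (feasible_agree s Ce Y) => //; apply: agree_sym; exact: agree_toXV FY.
have [c [[bc Hc] cmax]] := @evt_box (nn s) (Mbound s) f H cf cH (ex_intro _ (toV s X0) (conj (box X0 F0) (HV X0 F0))).
exists (toX s c); split.
  apply: HX_feasible => // q _; exact: toX_nonneg.
move=> Y FY.
have := cmax (toV s Y) (box Y FY) (HV Y FY).
rewrite /f (Phi_agree s g (toX s (toV s Y)) Y eg (agree_toXV s Ce Y FY)).
done.
Qed.


Lemma cont_rt (s : params) (Hs : valid_params s) (q : nat) :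
  Peano.lt q (NQ s) -> continuous (fun v : 'rV[R]_(nn s) => rt_s s q (toX s v q)).
Proof.
move=> Hq.
have P := fun v => pos_D s q (toX s v q) Hs Hq (toX_nonneg s v q).
rewrite /rt_s /r_qq /r_qe; apply: c_minus; apply: c_ln.
- move=> v; have [A [B [C D]]] := P v; move: A C; rewrite /DD => A C.
  have := div_nonneg _ _ C A; lra.
- apply: c_plus; first exact: c_cst.
  apply: c_div.
  + by move=> v; have [A _] := P v; move: A; rewrite /DD => A; lra.
  + by apply: c_mult; [exact: c_cst | exact: c_toX].
  + apply: c_plus; first exact: c_cst.
    by apply: c_rsum => j _; apply: c_mult; [exact: c_cst | exact: c_toX].
- move=> v; have [A [B [C D]]] := P v; move: B D; rewrite /DE => B D.
  have := div_nonneg _ _ D B; lra.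
- apply: c_plus; first exact: c_cst.
  apply: c_div.
  + by move=> v; have [_ [B _]] := P v; move: B; rewrite /DE => B; lra.
  + by apply: c_mult; [exact: c_cst | exact: c_toX].
  + apply: c_plus; first exact: c_cst.
    by apply: c_rsum => j _; apply: c_mult; [exact: c_cst | exact: c_toX].
Qed.

Lemma cont_rs (s : params) (Hs : valid_params s) (q : nat) :
  Peano.lt q (NQ s) -> continuous (fun v : 'rV[R]_(nn s) => r_s s q (toX s v q)).
Proof. by move=> Hq; rewrite /r_s; apply: c_max; [exact: c_cst | exact: cont_rt]. Qed.

Lemma cont_CqE (s : params) (q : nat) :
  Peano.lt q (NQ s) -> continuous (fun v : 'rV[R]_(nn s) => CqE s q (toX s v q)).
Proof.
move=> Hq; rewrite /CqE; apply: c_plus; last exact: c_cst.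
by apply: c_rsum => j _; apply: c_mult; [exact: c_cst | exact: c_toX].
Qed.

Lemma cont_one (s : params) (q : nat) :
  Peano.lt q (NQ s) -> continuous (fun v : 'rV[R]_(nn s) => (fun (_ : nat) (_ : nat -> R) => 1%coqR) q (toX s v q)).
Proof. by move=> _; exact: c_cst. Qed.

End MC.

Open Scope R_scope.
Local Notation "x < y" := (Peano.lt x y) : nat_scope.

Theorem proposition2 (s : params) (Hs : valid_params s) :
  (exists X, BQGNE s X) /\
  (P_nonempty s -> (exists X, QGNE_sm s X) /\ (exists X, rBQGNE s X)) /\
  (forall X, (BQGNE s X \/ rBQGNE s X) ->
     (forall q, (q < NQ s)%nat -> Cq s q (X q)) -> QGNE_sm s X) /\
  (forall X, QGNE_sm s X -> rBQGNE s X).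
Proof.
  split; [|split; [|split]].
  - destruct (exists_max s Hs (r_s s) (fun _ _ => 1) (rs_ext s) (one_ext s)
       (cont_rs s Hs) (cont_one s) (ex_intro _ _ (feasible_zero s Hs))) as (X & HF & Hm).
    exists X. apply part_a_from_max; assumption.
  - intros Hne.
    destruct (exists_max s Hs (rt_s s) (CqE s) (rt_ext s) (CqE_ext s)
       (cont_rt s Hs) (cont_CqE s) (feasible_Pne s Hne)) as (X & HF & Hm).
    assert (HQ : QGNE_sm s X) by (apply part_b_from_max; assumption).
    split; exists X; [exact HQ|apply part_d; assumption].
  - intros X HB HC. apply part_c; assumption.
  - intros X HQ. apply part_d; assumption.
Qed.
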